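(* Let $\bar\pi^*=A\pi^*$ be the optimal investment–reinsurance strategy for problem $(\bar P_{\varepsilon,\bar K_\pi})$, where $\pi^*(t)=\alpha(t,V^{v_f,\hat\pi_{\lambda^*}}(t))\hat\pi_{\lambda^*}$ with $\alpha(t,\cdot)>0$ for $t\in[0,T)$ is the optimal strategy for $(P_{\varepsilon,K_\pi})$. Then for $t\in[0,T)$ it is optimal for the insurer to hold a strictly positive position in reinsurance, i.e. $\bar\pi_2^*(t)>0$, if and only if $$SR_2^{\lambda^*}<\rho\cdot SR_1^{\lambda^*},\qquad\text{where } SR_i^{\lambda^*}=\frac{\mu_i+\lambda_i^*-r}{\sigma_i},\ i=1,2,$$ and $\lambda^*=\arg\min_{x\in K_\pi}\|\gamma+\sigma^{-1}x\|^2$.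
   Context: Market: $dS_0=S_0r\,dt$, $dS_1=S_1(\mu_1dt+\sigma_1dW_1)$, $dS_2=S_2(\mu_2dt+\sigma_2(\rho dW_1+\sqrt{1-\rho^2}dW_2))$, two-dimensional Brownian motion $W$ under $\mathbb Q$; constants $\sigma_i>0$, $\rho\in(-1,1)$; $\sigma=\begin{pmatrix}\sigma_1&0\\ \sigma_2\rho&\sigma_2\sqrt{1-\rho^2}\end{pmatrix}$, $\mu=(\mu_1,\mu_2)'$, $\bar1=(1,1)'$, $\gamma=\sigma^{-1}(\mu-r\bar1)\ne0$; $K_\pi=[0,\infty)\times(-\infty,0]$, $\bar K_\pi=[0,\infty)^2$; utility $U(x)=x^b/b$, $b<1,b\ne0$; $\hat\pi_{\lambda^*}=\frac1{1-b}(\sigma\sigma')^{-1}(\mu+\lambda^*-r\bar1)$. Reinsurance: $G_T>0$, $v_0>0$, $\pi_B^{CM}\in(0,1]$; $V^{v_0,\pi_B}$ is the constant-mix wealth with fraction $\pi_B^{CM}$ in $S_2$ and the rest in $S_0$; $P(t)=S_0(t)\mathbb E_{\tilde{\mathbb Q}}[S_0(T)^{-1}(G_T-V^{v_0,\pi_B}(T))^+\mid\mathcal F_t]$ (a put, $\tilde{\mathbb Q}$ risk-neutral); $d_+(t)=\frac{\ln(V^{v_0,\pi_B}(t)/G_T)+(r+\frac12(\pi_B^{CM}\sigma_2)^2)(T-t)}{\pi_B^{CM}\sigma_2\sqrt{T-t}}$; $A(t)=\operatorname{diag}\big(1,\frac{P(t)}{\pi_B^{CM}V^{v_0,\pi_B}(t)(\Phi(d_+(t))-1)}\big)$.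 $(P_{\varepsilon,K_\pi})$: maximize expected utility of terminal wealth from trading $S_0,S_1,S_2$ (fractions $\pi=(\pi_1,\pi_2)'$ in $S_1,S_2$) subject to $\mathbb Q(V(T)<G_T)\le\varepsilon$ and $\pi(t)\in K_\pi$. $(\bar P_{\varepsilon,\bar K_\pi})$: the same with trading in $S_0,S_1,P$ (fractions $\bar\pi=(\bar\pi_1,\bar\pi_2)'$ in $S_1,P$) and $\bar\pi(t)\in\bar K_\pi$. Here $v_f$ denotes the initial capital parameter of the optimal solution of $(P_{\varepsilon,K_\pi})$. *)

(* Defs.v *)
From Stdlib Require Import Reals Lra.
From Coquelicot Require Import Coquelicot.
Open Scope R_scope.

Definition vadd (x y : R * R) : R * R := (fst x + fst y, snd x + snd y).
Definition vscale (c : R) (x : R * R) : R * R := (c * fst x, c * snd x).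
Definition norm2 (x : R * R) : R := fst x ^ 2 + snd x ^ 2.

(* sigma = [[s1, 0], [s2*rho, s2*sqrt(1-rho^2)]] ; sigma^{-1} x *)
Definition sig_inv (s1 s2 rho : R) (x : R * R) : R * R :=
  (fst x / s1, (snd x - s2 * rho * (fst x / s1)) / (s2 * sqrt (1 - rho ^ 2))).
Definition sigT_inv (s1 s2 rho : R) (y : R * R) : R * R :=
  let z2 := snd y / (s2 * sqrt (1 - rho ^ 2)) in
  ((fst y - s2 * rho * z2) / s1, z2).
Definition sigsigT_inv (s1 s2 rho : R) (v : R * R) : R * R :=
  sigT_inv s1 s2 rho (sig_inv s1 s2 rho v).

Definition gamma (r mu1 mu2 s1 s2 rho : R) : R * R :=
  sig_inv s1 s2 rho (mu1 - r, mu2 - r).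

Definition K_pi (x : R * R) : Prop := 0 <= fst x /\ snd x <= 0.

Definition is_lambda_star (r mu1 mu2 s1 s2 rho : R) (lam : R * R) : Prop :=
  K_pi lam /\
  forall x, K_pi x ->
    norm2 (vadd (gamma r mu1 mu2 s1 s2 rho) (sig_inv s1 s2 rho lam))
    <= norm2 (vadd (gamma r mu1 mu2 s1 s2 rho) (sig_inv s1 s2 rho x)).

Definition pi_hat (b r mu1 mu2 s1 s2 rho : R) (lam : R * R) : R * R :=
  vscale (1 / (1 - b))
    (sigsigT_inv s1 s2 rho (mu1 + fst lam - r, mu2 + snd lam - r)).

Definition SR1 (r mu1 s1 : R) (lam : R * R) : R := (mu1 + fst lam - r) / s1.
Definition SR2 (r mu2 s2 : R) (lam : R * R) : R := (mu2 + snd lam - r) / s2.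

Definition Phi (x : R) : R :=
  / sqrt (2 * PI) *
  RInt_gen (fun u => exp (- (u ^ 2) / 2)) (Rbar_locally m_infty) (at_point x).

(* d_+(t) for the constant-mix wealth value VB = V^{v0,piB}(t) *)
Definition d_plus (r s2 piB GT T t VB : R) : R :=
  (ln (VB / GT) + (r + / 2 * (piB * s2) ^ 2) * (T - t))
  / (piB * s2 * sqrt (T - t)).

(* Price at time t of the put (G_T - V^{v0,piB}(T))^+ : V^{v0,piB} is under the
   risk-neutral measure a geometric Brownian motion with drift r and
   volatility piB*s2, so P(t) is given by the Black-Scholes put formula. *)
Definition put_price (r s2 piB GT T t VB : R) : R :=
  let dp := d_plus r s2 piB GT T t VB in
  let dm := dp - piB * s2 * sqrt (T - t) in
  GT * exp (- r * (T - t)) * Phi (- dm) - VB * Phi (- dp).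

(* second diagonal entry of A(t) *)
Definition A22 (r s2 piB GT T t VB : R) : R :=
  put_price r s2 piB GT T t VB
  / (piB * VB * (Phi (d_plus r s2 piB GT T t VB) - 1)).

(* pi*(t) = alpha(t, V^{v_f, hat pi}(t)) hat pi_{lambda*},
   bar pi*(t) = A(t) pi*(t); second component: *)
Definition pibar2_star (b r mu1 mu2 s1 s2 rho piB GT T t VB : R)
  (alpha : R -> R -> R) (Vopt : R) (lam : R * R) : R :=
  A22 r s2 piB GT T t VB *
  (alpha t Vopt * snd (pi_hat b r mu1 mu2 s1 s2 rho lam)).

(* Main.v *)
Require Import Defs.
From Stdlib Require Import Reals Lra.
From Coquelicot Require Import Coquelicot.
Open Scope R_scope.
Definition Gs (z : R) : R := RInt (fun s => exp (- (s ^ 2))) 0 z.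
Lemma Gs0 : Gs 0 = 0.
Proof. unfold Gs. rewrite RInt_point. reflexivity. Qed.
Lemma cont_of_der (f : R -> R) x : ex_derive f x -> continuous f x.
Proof. intro H. exact (ex_derive_continuous f x H). Qed.
Lemma Gs_der x : derivable_pt_lim Gs x (exp (- (x ^ 2))).
Proof.
apply is_derive_Reals. unfold Gs.
apply (is_derive_RInt (fun s => exp (- (s ^ 2))) _ 0).
- apply filter_forall. intro y. apply (@RInt_correct R_CompleteNormedModule). apply ex_RInt_continuous. intros z _.
  apply cont_of_der. auto_derive. auto.
- apply cont_of_der. auto_derive. auto.
Qed.
Module MC.
From mathcomp Require Import all_boot all_order all_algebra.
From mathcomp Require Import all_classical all_reals all_analysis.
From mathcomp Require Import Rstruct Rstruct_topology.
Import Order.TTheory GRing.Theory Num.Theory.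
Import numFieldNormedType.Exports.
Local Open Scope classical_set_scope.
Local Open Scope ring_scope.

Lemma bridge_der (f : R^o -> R^o) x l : derivable_pt_lim f x l ->
  derivable f x 1 /\ derive1 f x = l.
Proof.
move=> H.
rewrite derive1E /derive /derivable.
set F := (X in lim X); suff C : F --> l.
  split; first by apply/cvg_ex; exists l.
  by apply/cvg_lim.
rewrite /F.
apply/cvgrPdist_lt => e e0.
have e0' : (0 < e)%coqR by apply/RltP.
have [[d d0] Hd] := H e e0'.
have d0' : 0 < d by apply/RltP.
exists d => //.
move=> h /= hd hn0.
have : (Rabs h < d)%coqR.
  apply/RltP. by rewrite RabsE -normrN -[X in `|X|]add0r.
move/(Hd h (elimN eqP hn0))/RltP.
rewrite RabsE => H2.
rewrite distrC.
move: H2.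
rewrite /Rdiv RminusE RmultE RinvE RplusE /=.
have -> : h%:A = h by rewrite /GRing.scale /= mulr1.
by rewrite [h + x]addrC mulrC.

Qed.

Arguments bridge_der {f x l}.
Lemma bridge_cont (F : R^o -> R^o) x l : derivable_pt_lim F x l -> {for x, continuous F}.
Proof.
move=> /bridge_der [d _].
by apply: differentiable_continuous; apply/derivable1_diffP.
Qed.

Arguments bridge_cont {F x l}.
Lemma ftc_bridge (f F : R^o -> R^o) a b : a < b ->
  {within `[a, b], continuous f} ->
  (forall x, derivable_pt_lim F x (f x)) ->
  Rintegral (@lebesgue_measure R) `[a, b] f = F b - F a.
Proof.
move=> ab cf dF.
rewrite /Rintegral (@continuous_FTC2 R f F a b ab cf) //=.
- split.
  + by move=> x _; have [] := bridge_der (dF x).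
  + by apply: cvg_at_right_filter; apply: (bridge_cont (dF a)).
  + by apply: cvg_at_left_filter; apply: (bridge_cont (dF b)).
- by move=> x _; have [] := bridge_der (dF x).
Qed.

Lemma pi_PI : pi = PI.
Proof.
have H1 := @integral0_oneDsqr R 1 ler01.
rewrite atan1 in H1.
have H2 := @ftc_bridge (fun x : R => (oneDsqr x)^-1) Ratan.atan 0 1 ltr01.
rewrite H2 in H1; last first.
  move=> x; have := derivable_pt_lim_atan x.
  by rewrite /oneDsqr RpowE RinvE RplusE.
  by apply: continuous_in_subspaceT => x ?; exact: continuous_oneDsqrV.
move: H1; rewrite atan_1 atan_0 subr0 RdivE.
have h4 : (4%:R : R) = 4%coqR by rewrite -INRE INR_IZR_INZ.
rewrite h4.
have n4 : (4%coqR : R) != 0 by rewrite -h4 pnatr_eq0.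
by move=> /(congr1 (fun y => y * 4%coqR)); rewrite !mulfVK.
Qed.

Lemma Gs_eq z : 0 < z -> gauss_integral_proof.integral0_gauss z = Gs z.
Proof.
move=> z0.
rewrite /gauss_integral_proof.integral0_gauss.
rewrite (@ftc_bridge gauss_fun Gs 0 z z0).
- by rewrite Gs0 subr0.
- by apply: continuous_subspaceT; exact: continuous_gauss_fun.
- move=> x; have := Gs_der x.
  by rewrite /gauss_fun RexpE RpowE.
Qed.

Lemma Gs_cvg : Gs z @[z --> +oo] --> Num.sqrt pi / 2.
Proof.
have cvg_Ig : @gauss_integral_proof.integral0_gauss R x @[x --> +oo] --> Num.sqrt pi / 2.
  have : Num.sqrt (@gauss_integral_proof.integral0_gauss R x ^+ 2) @[x --> +oo]
      --> Num.sqrt (pi / 4).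
    apply: continuous_cvg => //;
      [exact: sqrt_continuous|exact: gauss_integral_proof.cvg_integral0_gauss_sqr].
  rewrite sqrtrM ?pi_ge0// sqrtrV// (_ : 4 = 2 ^+ 2); last first.
    by rewrite expr2 -natrM.
  rewrite sqrtr_sqr ger0_norm//.
  rewrite (_ : (fun _ => Num.sqrt _) = gauss_integral_proof.integral0_gauss)//.
  apply/funext => r; rewrite sqrtr_sqr// ger0_norm//.
  exact: gauss_integral_proof.integral0_gauss_ge0.
apply: cvg_trans cvg_Ig; apply: near_eq_cvg.
near=> x; rewrite Gs_eq //.
Unshelve. end_near. Qed.

Lemma Gs_lim_eps (eps : R) : (0 < eps)%coqR -> exists M : R, forall z : R, (M < z)%coqR ->
  (Rabs (Gs z - sqrt PI / 2) < eps)%coqR.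
Proof.
move=> /RltP e0.
have /(@cvgrPdist_lt _ R^o) H := Gs_cvg.
have [M [_ HM]] := H eps e0.
exists M => z /RltP Mz; apply/RltP.
by rewrite RabsE distrC RsqrtE -pi_PI; apply: HM.
Qed.
End MC.

Definition phi (u : R) : R := exp (- (u ^ 2) / 2).
Definition G (y : R) : R := RInt phi 0 y.
Definition SS : R := sqrt (2 * PI).

Lemma ex_RInt_cont (f : R -> R) a b : (forall z, continuous f z) -> ex_RInt f a b.
Proof. intro H. exact (ex_RInt_continuous f a b (fun z _ => H z)). Qed.

Lemma phi_pos u : 0 < phi u.
Proof. apply exp_pos. Qed.

Lemma phi_cont x : continuous phi x.
Proof. apply cont_of_der. unfold phi. auto_derive. auto. Qed.

Lemma ex_phi a b : ex_RInt phi a b.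
Proof. apply ex_RInt_cont. intros; apply phi_cont. Qed.

Lemma G_der x : is_derive G x (phi x).
Proof.
unfold G. apply (is_derive_RInt phi _ 0).
- apply filter_forall. intro y. apply (@RInt_correct R_CompleteNormedModule). apply ex_phi.
- apply phi_cont.
Qed.

Lemma G_chasles a b : G b - G a = RInt phi a b.
Proof.
unfold G. pose proof (RInt_Chasles phi 0 a b (ex_phi 0 a) (ex_phi a b)) as H.
change (RInt phi 0 a + RInt phi a b = RInt phi 0 b) in H. lra.
Qed.

Lemma G_incr a b : a < b -> G a < G b.
Proof.
intro H. cut (0 < RInt phi a b). { rewrite <- G_chasles. lra. }
assert (E : RInt (fun _ => 0) a b = 0).
{ pose proof (RInt_const (V:=R_CompleteNormedModule) a b 0) as E. change (RInt (fun _ => 0) a b = (b - a) * 0) in E. rewrite E. apply Rmult_0_r. }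
rewrite <- E. apply RInt_lt; auto.
- intros; apply phi_cont.
- intros; apply continuous_const.
- intros; apply phi_pos.
Qed.

Lemma sqrt2_pos : 0 < sqrt 2.
Proof. apply sqrt_lt_R0. lra. Qed.

Lemma G_scale y : G y = sqrt 2 * Gs (y / sqrt 2).
Proof.
pose proof sqrt2_pos as Hs.
assert (H2 : sqrt 2 * sqrt 2 = 2) by (apply sqrt_sqrt; lra).
unfold Gs.
replace (y / sqrt 2) with (/ sqrt 2 * y + 0) by (field; lra).
replace 0 with (/ sqrt 2 * 0 + 0) at 1 by ring.
rewrite <- RInt_comp_lin.
2:{ apply ex_RInt_cont. intros. apply cont_of_der. auto_derive. auto. }
rewrite (RInt_ext _ (fun t => / sqrt 2 * phi t)).
2:{ intros t _. unfold phi. change (scal (/ sqrt 2) (exp (- (/ sqrt 2 * t + 0) ^ 2)))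
    with (/ sqrt 2 * exp (- (/ sqrt 2 * t + 0) ^ 2)).
    f_equal. f_equal. 
    replace ((/ sqrt 2 * t + 0) ^ 2) with (t ^ 2 / (sqrt 2 * sqrt 2)) by (field; lra).
    rewrite H2. field. }
pose proof (RInt_scal (V:=R_CompleteNormedModule) phi 0 y (/sqrt 2) (ex_phi 0 y)) as E.
change (RInt (fun t => /sqrt 2 * phi t) 0 y = /sqrt 2 * RInt phi 0 y) in E. rewrite E.
unfold G.
generalize (RInt phi 0 y). intro I. rewrite <- Rmult_assoc, Rinv_r by lra. symmetry. apply Rmult_1_l.
Qed.

Lemma SS_eq : SS = sqrt 2 * sqrt PI.
Proof. unfold SS. apply sqrt_mult; pose proof PI_RGT_0; lra. Qed.

Lemma SS_pos : 0 < SS.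
Proof. unfold SS. apply sqrt_lt_R0. pose proof PI_RGT_0; lra. Qed.

Lemma G_lim eps : 0 < eps -> exists M, forall y, M < y -> Rabs (G y - SS / 2) < eps.
Proof.
intro He. pose proof sqrt2_pos as Hs.
destruct (MC.Gs_lim_eps (eps / sqrt 2)) as [M0 HM0].
{ apply Rdiv_lt_0_compat; lra. }
exists (M0 * sqrt 2). intros y Hy.
rewrite G_scale, SS_eq.
replace (sqrt 2 * Gs (y / sqrt 2) - sqrt 2 * sqrt PI / 2)
  with (sqrt 2 * (Gs (y / sqrt 2) - sqrt PI / 2)) by field.
rewrite Rabs_mult, (Rabs_right (sqrt 2)) by lra.
assert (Rabs (Gs (y / sqrt 2) - sqrt PI / 2) < eps / sqrt 2).
{ apply HM0. apply (Rmult_lt_reg_r (sqrt 2)); auto.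
  replace (y / sqrt 2 * sqrt 2) with y by (field; lra). lra. }
replace eps with (sqrt 2 * (eps / sqrt 2)) by (field; lra).
apply Rmult_lt_compat_l; auto.
Qed.

Lemma G_odd y : G (- y) = - G y.
Proof.
unfold G.
replace (- y) with (-1 * y + 0) by ring.
replace 0 with (-1 * 0 + 0) at 1 by ring.
rewrite <- RInt_comp_lin by apply ex_phi.
rewrite (RInt_ext _ (fun t => -1 * phi t)).
2:{ intros t _. unfold phi. change (scal (-1) (exp (- (-1 * t + 0) ^ 2 / 2)))
    with (-1 * exp (- (-1 * t + 0) ^ 2 / 2)).
    f_equal. f_equal. f_equal. f_equal. ring. }
pose proof (RInt_scal (V:=R_CompleteNormedModule) phi 0 y (-1) (ex_phi 0 y)) as E.
change (RInt (fun t => -1 * phi t) 0 y = -1 * RInt phi 0 y) in E. rewrite E.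
generalize (RInt phi 0 y). intro I. 
assert (K : forall z : R, -1 * z = - z) by (intro; ring). apply K.
Qed.

Lemma G_le_lim y : G y <= SS / 2.
Proof.
destruct (Rle_or_lt (G y) (SS / 2)) as [H|H]; auto.
destruct (G_lim (G y - SS / 2)) as [M HM]; [lra|].
set (z := Rmax M y + 1).
assert (Hz1 : M < z) by (unfold z; pose proof (Rmax_l M y); lra).
assert (Hz2 : y < z) by (unfold z; pose proof (Rmax_r M y); lra).
specialize (HM z Hz1). pose proof (G_incr y z Hz2).
rewrite Rabs_right in HM by lra. lra.
Qed.

Lemma G_lt y : G y < SS / 2.
Proof. pose proof (G_incr y (y + 1)). pose proof (G_le_lim (y + 1)). lra. Qed.

Lemma G_gt y : - (SS / 2) < G y.
Proof. pose proof (G_lt (- y)). rewrite G_odd in H. lra. Qed.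

Lemma Phi_gen x :
  is_RInt_gen phi (Rbar_locally m_infty) (at_point x) (SS / 2 + G x).
Proof.
intros P [eps HP].
destruct (G_lim eps (cond_pos eps)) as [M0 HM0].
apply (Filter_prod _ _ _ (fun a => a < - M0) (fun b => b = x)).
- exists (- M0). auto.
- reflexivity.
- intros a b Ha Hb. simpl. subst b.
  exists (G x - G a). split.
  + rewrite G_chasles. apply (@RInt_correct R_CompleteNormedModule). apply ex_phi.
  + apply HP. 
    change (Rabs (G x - G a - (SS / 2 + G x)) < eps).
    replace (G x - G a - (SS / 2 + G x)) with (G (- a) - SS / 2)
      by (rewrite G_odd; ring).
    apply HM0. lra.
Qed.

Lemma Phi_eq x : Phi x = / 2 + G x / SS.
Proof.
unfold Phi.
rewrite (is_RInt_gen_unique (fun u => exp (- (u ^ 2) / 2)) (SS / 2 + G x)).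
- fold SS. pose proof SS_pos. field. lra.
- apply Phi_gen.
Qed.

Definition Q (z : R) : R := / 2 + G z / SS.

Lemma Q_pos z : 0 < Q z.
Proof. unfold Q. pose proof (G_gt z). pose proof SS_pos.
apply Rmult_lt_reg_r with SS; auto. field_simplify; lra. Qed.

Lemma Q_lt1 z : Q z < 1.
Proof. unfold Q. pose proof (G_lt z). pose proof SS_pos.
apply Rmult_lt_reg_r with SS; auto. field_simplify; lra. Qed.

Lemma Q_der z : is_derive Q z (phi z / SS).
Proof.
unfold Q. pose proof SS_pos.
assert (D : Derive (fun x => G x) z = phi z) by (apply is_derive_unique, G_der).
auto_derive.
- exists (phi z). apply G_der.
- rewrite D. field. lra.
Qed.

Section Put.
Variable a : R.
Hypothesis a_pos : 0 < a.

Definition Fp (m : R) : R := exp m * Q (m / a + a / 2) - Q (m / a - a / 2).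

Lemma phi_shift m : exp m * phi (m / a + a / 2) = phi (m / a - a / 2).
Proof.
unfold phi. rewrite <- exp_plus. f_equal. field. lra.
Qed.

Lemma Fp_der m : is_derive Fp m (exp m * Q (m / a + a / 2)).
Proof.
unfold Fp.
assert (D : forall z, Derive (fun x => Q x) z = phi z / SS) by (intro; apply is_derive_unique, Q_der).
auto_derive.
- split; [exists (phi (m / a + a / 2) / SS); apply Q_der|].
  split; [|exact I]. exists (phi (m / a - a / 2) / SS); apply Q_der.
- rewrite !D.
  replace (m * / a + - (a / 2)) with (m / a - a / 2) by (unfold Rdiv; ring).
  replace (m * / a + a / 2) with (m / a + a / 2) by (unfold Rdiv; ring).
  rewrite <- phi_shift. pose proof SS_pos. field. split; lra.
Qed.

Lemma Fp_incr m1 m2 : m1 < m2 -> Fp m1 < Fp m2.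
Proof.
intro H.
destruct (MVT_gen Fp m1 m2 (fun m => exp m * Q (m / a + a / 2))) as [c [Hc E]].
- intros x _. apply Fp_der.
- intros x _. apply continuity_pt_filterlim. apply cont_of_der.
  exists (exp x * Q (x / a + a / 2)). apply Fp_der.
- assert (0 < exp c * Q (c / a + a / 2)).
  { apply Rmult_lt_0_compat. apply exp_pos. apply Q_pos. }
  assert (0 < (exp c * Q (c / a + a / 2)) * (m2 - m1)).
  { apply Rmult_lt_0_compat; lra. }
  lra.
Qed.

Lemma Fp_small eps : 0 < eps -> exists N, forall y, y < N -> Rabs (Fp y) < eps.
Proof.
intro He. pose proof SS_pos as HS.
destruct (G_lim (eps / 2 * SS)) as [M HM].
{ apply Rmult_lt_0_compat; lra. }
exists (Rmin (ln (eps / 2)) (a * (a / 2 - M))).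
intros y Hy.
assert (Hy1 : y < ln (eps / 2)) by (pose proof (Rmin_l (ln (eps / 2)) (a * (a / 2 - M))); lra).
assert (Hy2 : y < a * (a / 2 - M)) by (pose proof (Rmin_r (ln (eps / 2)) (a * (a / 2 - M))); lra).
assert (E1 : exp y < eps / 2).
{ rewrite <- (exp_ln (eps / 2)) by lra. apply exp_increasing. auto. }
assert (E2 : Q (y / a - a / 2) < eps / 2).
{ set (w := y / a - a / 2).
  assert (Hw : M < - w).
  { unfold w. apply Rmult_lt_reg_l with a; auto.
    replace (a * - (y / a - a / 2)) with (a * (a / 2) - y) by (field; lra). lra. }
  specialize (HM (- w) Hw). rewrite G_odd in HM.
  apply Rabs_def2 in HM. destruct HM as [HM1 HM2].
  unfold Q. apply Rmult_lt_reg_r with SS; auto.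
  replace ((/ 2 + G w / SS) * SS) with (SS / 2 + G w) by (field; lra). lra. }
pose proof (Q_pos (y / a + a / 2)). pose proof (Q_lt1 (y / a + a / 2)).
pose proof (Q_pos (y / a - a / 2)). pose proof (exp_pos y).
assert (0 < exp y * Q (y / a + a / 2) < exp y).
{ split. apply Rmult_lt_0_compat; lra.
  rewrite <- (Rmult_1_r (exp y)) at 2. apply Rmult_lt_compat_l; lra. }
unfold Fp. apply Rabs_def1; lra.
Qed.

Lemma Fp_pos m : 0 < Fp m.
Proof.
destruct (Rle_or_lt (Fp m) 0) as [H|H]; auto.
exfalso.
pose proof (Fp_incr (m - 1) m ltac:(lra)) as H1.
destruct (Fp_small (- Fp (m - 1))) as [N HN]; [lra|].
set (y := Rmin N (m - 1) - 1).
assert (Hy1 : y < N) by (unfold y; pose proof (Rmin_l N (m - 1)); lra).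
assert (Hy2 : y < m - 1) by (unfold y; pose proof (Rmin_r N (m - 1)); lra).
specialize (HN y Hy1). pose proof (Fp_incr y (m - 1) Hy2).
apply Rabs_def2 in HN. lra.
Qed.
End Put.

Lemma Phi_Q x : Phi x = Q x.
Proof. rewrite Phi_eq. reflexivity. Qed.

Lemma put_pos r s2 piB GT T t VB : 0 < s2 -> 0 < GT -> 0 < piB -> t < T -> 0 < VB ->
  0 < put_price r s2 piB GT T t VB.
Proof.
intros Hs2 HGT HpiB HtT HVB.
set (tau := T - t).
assert (Htau : 0 < tau) by (unfold tau; lra).
assert (Hst : 0 < sqrt tau) by (apply sqrt_lt_R0; auto).
assert (Hst2 : sqrt tau * sqrt tau = tau) by (apply sqrt_sqrt; lra).
set (a := piB * s2 * sqrt tau).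
assert (Ha : 0 < a) by (unfold a; repeat apply Rmult_lt_0_compat; auto).
set (m := - (ln (VB / GT) + r * tau)).
assert (K : (piB * s2) ^ 2 * tau = a * a).
{ unfold a. replace (piB * s2 * sqrt tau * (piB * s2 * sqrt tau)) with ((piB * s2) ^ 2 * (sqrt tau * sqrt tau)) by ring.
  rewrite Hst2. ring. }
assert (Edp : d_plus r s2 piB GT T t VB = - (m / a - a / 2)).
{ unfold d_plus. fold tau. fold a.
  replace ((r + / 2 * (piB * s2) ^ 2) * tau) with (r * tau + / 2 * ((piB * s2) ^ 2 * tau)) by ring.
  rewrite K. unfold m. field. lra. }
assert (Eex : GT * exp (- r * (T - t)) = VB * exp m).
{ unfold m. fold tau. rewrite exp_Ropp, exp_plus. rewrite exp_ln by (unfold Rdiv; apply Rmult_lt_0_compat; [|apply Rinv_0_lt_compat]; assumption).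
  replace (- r * tau) with (- (r * tau)) by ring. rewrite exp_Ropp. pose proof (exp_pos (r * tau)). field. split; lra. }
unfold put_price. cbv zeta. rewrite Edp, Eex.
replace (piB * s2 * sqrt (T - t)) with a by reflexivity.
replace (- (- (m / a - a / 2) - a)) with (m / a + a / 2) by (field; lra).
rewrite Ropp_involutive, !Phi_Q.
replace (VB * exp m * Q (m / a + a / 2) - VB * Q (m / a - a / 2)) with (VB * Fp a m) by (unfold Fp; ring).
apply Rmult_lt_0_compat; auto. apply Fp_pos; auto.
Qed.

Theorem proposition4
  (r mu1 mu2 s1 s2 rho b GT piB T t VB Vopt : R)
  (alpha : R -> R -> R) (lam : R * R) :
  0 < s1 -> 0 < s2 -> -1 < rho < 1 ->
  gamma r mu1 mu2 s1 s2 rho <> (0, 0) ->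
  b < 1 -> b <> 0 ->
  0 < GT -> 0 < piB <= 1 ->
  0 <= t < T ->
  0 < VB ->
  (forall u x, 0 <= u < T -> 0 < alpha u x) ->
  is_lambda_star r mu1 mu2 s1 s2 rho lam ->
  (0 < pibar2_star b r mu1 mu2 s1 s2 rho piB GT T t VB alpha Vopt lam
   <-> SR2 r mu2 s2 lam < rho * SR1 r mu1 s1 lam).
Proof.
intros Hs1 Hs2 Hrho _ Hb _ HGT HpiB Ht HVB Halpha _.
assert (HP : 0 < put_price r s2 piB GT T t VB) by (apply put_pos; lra).
assert (HPhi : Phi (d_plus r s2 piB GT T t VB) - 1 < 0)
  by (rewrite Phi_Q; pose proof (Q_lt1 (d_plus r s2 piB GT T t VB)); lra).
assert (HA : A22 r s2 piB GT T t VB < 0).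
{ unfold A22. unfold Rdiv. 
  set (P := put_price r s2 piB GT T t VB) in *.
  set (D := Phi (d_plus r s2 piB GT T t VB) - 1) in *.
  assert (0 < piB * VB) by (apply Rmult_lt_0_compat; lra).
  assert (piB * VB * D < 0) by nra.
  assert (/ (piB * VB * D) < 0) by (apply Rinv_lt_0_compat; auto).
  nra. }
assert (Hal : 0 < alpha t Vopt) by (apply Halpha; lra).
assert (Hq2 : 0 < 1 - rho ^ 2) by nra.
assert (Hq : 0 < sqrt (1 - rho ^ 2)) by (apply sqrt_lt_R0; auto).
remember (sqrt (1 - rho ^ 2)) as q eqn:Eq.
remember (mu1 + fst lam - r) as v1 eqn:Ev1. remember (mu2 + snd lam - r) as v2 eqn:Ev2.
remember (v2 - s2 * rho * (v1 / s1)) as Dd eqn:ED.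
assert (Ep : snd (pi_hat b r mu1 mu2 s1 s2 rho lam) = Dd * (/ (1 - b) / ((s2 * q) * (s2 * q)))).
{ unfold pi_hat, vscale, sigsigT_inv, sigT_inv, sig_inv. cbn [fst snd]. rewrite <- Eq, <- Ev1, <- Ev2, ED.
  assert (s2 * q <> 0) by (apply Rgt_not_eq, Rmult_lt_0_compat; auto).
  assert (q <> 0) by lra. assert (1 - b <> 0) by lra.
  field. repeat split; first [assumption | lra]. }
assert (Hc : 0 < / (1 - b) / ((s2 * q) * (s2 * q))).
{ apply Rdiv_lt_0_compat. apply Rinv_0_lt_compat; lra.
  apply Rmult_lt_0_compat; apply Rmult_lt_0_compat; auto. }
assert (ESR : SR2 r mu2 s2 lam - rho * SR1 r mu1 s1 lam = Dd / s2).
{ unfold SR1, SR2. rewrite <- Ev1, <- Ev2, ED. field. lra. }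
unfold pibar2_star. rewrite Ep.
generalize dependent (A22 r s2 piB GT T t VB). intros A HA.
generalize dependent (alpha t Vopt). intros al Hal.
generalize dependent (/ (1 - b) / (s2 * q * (s2 * q))). intros c Hc.
assert (HDs : Dd < 0 <-> Dd / s2 < 0).
{ split; intro H.
  - unfold Rdiv. assert (0 < / s2) by (apply Rinv_0_lt_compat; auto). nra.
  - assert (Dd = Dd / s2 * s2) by (field; lra). nra. }
split; intro H.
- assert (Dd < 0).
  { destruct (Rlt_or_le Dd 0) as [h|h]; auto.
    assert (0 <= al * (Dd * c)) by (apply Rmult_le_pos; [lra|]; apply Rmult_le_pos; lra).
    nra. }
  apply HDs in H0. lra.
- assert (Dd < 0) by (apply HDs; lra).
  assert (al * (Dd * c) < 0).
  { assert (Dd * c < 0) by nra. nra. }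
  nra.
Qed.
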